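(* Let $S$ be a semigroup. If there is an element $a\in S$ with $a\in aS$ such that $\mathbf{r}_S(a)$ is finitely generated as a right congruence, then $S=US^1$ for some finite set $U\subseteq S$.
   Context: $S^1$ is $S$ if $S$ is a monoid and otherwise $S$ with an identity adjoined. $\mathbf{r}_S(a)=\{(s,t)\in S\times S\mid as=at\}$. A right congruence is finitely generated if it is the smallest right congruence containing some finite subset of $S\times S$. *)

(* Defs.v *)
(* A semigroup is a carrier type S with an
   associative binary operation mul (passed as explicit binders). *)
From Stdlib Require Import List.
Export ListNotations.

Definition right_congruence {S : Type} (mul : S -> S -> S)
  (rho : S -> S -> Prop) : Prop :=
  (forall s, rho s s) /\
  (forall s t, rho s t -> rho t s) /\
  (forall s t u, rho s t -> rho t u -> rho s u) /\
  (forall s t u, rho s t -> rho (mul s u) (mul t u)).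

Definition gen_right_congruence {S : Type} (mul : S -> S -> S)
  (X : list (S * S)) : S -> S -> Prop :=
  fun s t => forall rho : S -> S -> Prop,
    right_congruence mul rho ->
    (forall p, In p X -> rho (fst p) (snd p)) -> rho s t.

Definition rann {S : Type} (mul : S -> S -> S) (a : S) : S -> S -> Prop :=
  fun s t => mul a s = mul a t.

Definition fg_right_congruence {S : Type} (mul : S -> S -> S)
  (rho : S -> S -> Prop) : Prop :=
  exists X : list (S * S), forall s t, rho s t <-> gen_right_congruence mul X s t.

(* Main.v *)
Require Import Defs.
From Stdlib Require Import List.

Theorem mainTheorem13 (S : Type) (mul : S -> S -> S)
  (assoc : forall x y z, mul x (mul y z) = mul (mul x y) z)
  (a : S) (haS : exists s, a = mul a s)
  (hfg : fg_right_congruence mul (rann mul a)) :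
  exists U : list S, forall s : S,
    exists u, In u U /\ (s = u \/ exists t, s = mul u t).
Proof.
  destruct hfg as [X HX]. destruct haS as [e He].
  set (U' := map fst X ++ map snd X).
  set (T := fun s => exists u, In u U' /\ (s = u \/ exists t, s = mul u t)).
  set (rho := fun s t => s = t \/ (T s /\ T t)).
  assert (Hrc : right_congruence mul rho).
  { unfold right_congruence, rho. split; [|split; [|split]].
    - intros; left; reflexivity.
    - intros s t [H|[H1 H2]]; [left; congruence | right; tauto].
    - intros s t u [H|[H1 H2]] [H'|[H1' H2']]; subst; auto.
    - intros s t u [H|[H1 H2]]; [left; congruence|right].
      assert (Hm : forall x, T x -> T (mul x u)).
      { intros x [v [Hv [Hx|[w Hx]]]]; exists v; split; auto; right; subst.
        - exists u; reflexivity.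
        - exists (mul w u); symmetry; apply assoc. }
      auto. }
  assert (HXin : forall p, In p X -> rho (fst p) (snd p)).
  { intros p Hp. right. split.
    - exists (fst p); split; auto. unfold U'. apply in_or_app; left; apply in_map; auto.
    - exists (snd p); split; auto. unfold U'. apply in_or_app; right; apply in_map; auto. }
  exists (e :: U'). intros s.
  assert (Hr : rann mul a s (mul e s)).
  { unfold rann. rewrite assoc, <- He. reflexivity. }
  apply HX in Hr. specialize (Hr rho Hrc HXin).
  destruct Hr as [H|[[u [Hu Hs]] _]].
  - exists e; split; [left; reflexivity|right; exists s; exact H].
  - exists u; split; [right; exact Hu| exact Hs].
Qed.
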